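(* Let $S\subseteq V$ with $|S|=\zeta$, and let $G$ be a $d$-colored $d$-regular graph on $V$ having a connected component $C$ with $C\subseteq S$ and $|C|\ge(1-\gamma)z$. Then the verifier $\mathcal{A}_{\mathsf{QMA}}$ described below, given the witness $|S\rangle=\frac{1}{\sqrt{|S|}}\sum_{v\in S}|v\rangle$ and oracle access to $G$, accepts with probability at least $1-3\sqrt{\gamma}$.
   Context: $N=2^n$ (sufficiently large), $|V|=N$; $d=100$, $\ell=N^{1/10}$, $\gamma=N^{-1/10}$, $z=N/\ell=N^{9/10}$, $\zeta=(1+\gamma)z$. A $d$-colored $d$-regular graph has exactly one incident edge of each color $\kappa\in[d]$ at each vertex (self-loops allowed); $G(j,\kappa)$ is the $\kappa$-neighbor of $j$, and the oracle is $|j,\kappa,z\rangle\mapsto|j,\kappa,z\oplus G(j,\kappa)\rangle$. Using two oracle calls one implements $U_{\mathrm{walk}}|j,\kappa\rangle=|G(j,\kappa),\kappa\rangle$ (and its controlled version). Let $|\bar 0_V\rangle=N^{-1/2}\sum_{j\in V}|j\rangle$ and $|\bar0_d\rangle=d^{-1/2}\sum_{\kappa\in[d]}|\kappa\rangle$. The verifier $\mathcal{A}_{\mathsf{QMA}}$ on witness register $W$ (state $|\psi\rangle$): prepare a control qubit in $|+\rangle$ and a color register in $|\bar0_d\rangle$; apply $U_{\mathrm{walk}}$ to $(W,\text{color})$ controlled on the control qubit; measure the control in the $\{|+\rangle,|-\rangle\}$ basis and the color register with $\{|\bar0_d\rangle\langle\bar0_d|,I-|\bar0_d\rangle\langle\bar0_d|\}$,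 rejecting unless the outcomes are $+$ and $\bar0_d$; then measure $W$ with $\{|\bar0_V\rangle\langle\bar0_V|,I-|\bar0_V\rangle\langle\bar0_V|\}$, rejecting on the first outcome and accepting otherwise. *)

(* Defs.v *)
From mathcomp Require Import all_boot all_order all_algebra all_field.
Set Implicit Arguments. Unset Strict Implicit. Unset Printing Implicit Defensive.
Import Order.TTheory GRing.Theory Num.Theory.
Local Open Scope ring_scope.

(* A d-colored d-regular graph on 'I_N: G j k is the k-neighbour of j.
   Each vertex has exactly one incident edge of each colour, i.e. the
   k-neighbour of the k-neighbour of j is j (self-loops allowed). *)
Definition colored_regular (N d : nat) (G : 'I_N -> 'I_d -> 'I_N) : Prop :=
  forall (j : 'I_N) (k : 'I_d), G (G j k) k = j.

Definition gedge (N d : nat) (G : 'I_N -> 'I_d -> 'I_N) : rel 'I_N :=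
  fun j k => [exists c : 'I_d, G j c == k].

Definition is_component (N d : nat) (G : 'I_N -> 'I_d -> 'I_N)
    (C : {set 'I_N}) : Prop :=
  exists v : 'I_N, C = [set w | connect (gedge G) v w].

Definition ell (N : nat) : algC := 10.-root (N%:R).
Definition gamma (N : nat) : algC := (ell N)^-1.
Definition zpar (N : nat) : algC := N%:R / ell N.
Definition zeta (N : nat) : algC := (1 + gamma N) * zpar N.

Definition app (T : finType) (M : T -> T -> algC) (phi : T -> algC) : T -> algC :=
  fun x => \sum_(y : T) M x y * phi y.

Definition norm2 (T : finType) (phi : T -> algC) : algC :=
  \sum_(x : T) `|phi x| ^+ 2.

Definition ket_plus (b : bool) : algC := (sqrtC 2)^-1.
Definition ket0bar (n : nat) (i : 'I_n) : algC := (sqrtC n%:R)^-1.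
Definition ketS (N : nat) (S : {set 'I_N}) (j : 'I_N) : algC :=
  if j \in S then (sqrtC #|S|%:R)^-1 else 0.

(* Registers: control (bool) * (witness W ('I_N) * colour ('I_d)) *)
Definition reg (N d : nat) := (bool * ('I_N * 'I_d))%type.

Definition init_state (N d : nat) (psi : 'I_N -> algC) (x : reg N d) : algC :=
  ket_plus x.1 * psi x.2.1 * ket0bar x.2.2.

Definition Uwalk (N d : nat) (G : 'I_N -> 'I_d -> 'I_N)
    (x y : 'I_N * 'I_d) : algC :=
  ((G y.1 y.2 == x.1) && (y.2 == x.2))%:R.

Definition CUwalk (N d : nat) (G : 'I_N -> 'I_d -> 'I_N) (x y : reg N d) : algC :=
  if (x.1 == y.1) then (if y.1 then Uwalk G x.2 y.2 else (x.2 == y.2)%:R)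
  else 0.

Definition P_plus_0bar (N d : nat) (x y : reg N d) : algC :=
  ket_plus x.1 * (ket_plus y.1)^* * (x.2.1 == y.2.1)%:R *
  ket0bar x.2.2 * (ket0bar y.2.2)^*.

Definition P_W_perp (N d : nat) (x y : reg N d) : algC :=
  (x.1 == y.1)%:R * (x.2.2 == y.2.2)%:R *
  ((x.2.1 == y.2.1)%:R - ket0bar x.2.1 * (ket0bar y.2.1)^*).

(* Acceptance probability of the verifier A_QMA on witness psi with oracle G:
   squared norm of the (unnormalised) post-measurement state after the outcomes
   (+, 0bar_d) and then "not 0bar_V". *)
Definition accept_prob (N d : nat) (G : 'I_N -> 'I_d -> 'I_N)
    (psi : 'I_N -> algC) : algC :=
  norm2 (app (@P_W_perp N d) (app (@P_plus_0bar N d)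
          (app (CUwalk G) (@init_state N d psi)))).

(* Main.v *)
Require Import Defs.
From mathcomp Require Import all_boot all_order all_algebra all_field.
From mathcomp Require Import ring lra.
Import Order.TTheory GRing.Theory Num.Theory.
Local Open Scope ring_scope.

Lemma sum_delta (T : finType) (a : T) (f : T -> algC) :
  \sum_(y : T) (a == y)%:R * f y = f a.
Proof.
rewrite (bigD1 a) //= eqxx mul1r big1 ?addr0 // => y /negbTE.
by rewrite eq_sym => ->; rewrite mul0r.
Qed.

Lemma sum_reg (N d : nat) (F : reg N d -> algC) :
  \sum_(y : reg N d) F y = \sum_(b : bool) \sum_(j : 'I_N) \sum_(k : 'I_d) F (b, (j, k)).
Proof.
symmetry.
under eq_bigr => b _ do rewrite (pair_bigA _ (fun j k => F (b, (j, k)))).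
rewrite (pair_bigA _ (fun b p => F (b, (p.1, p.2)))) /=.
by apply: eq_bigr; case=> b [j k].
Qed.

Definition cc (n : nat) : algC := (sqrtC n%:R)^-1.

Lemma cc_ge0 n : 0 <= cc n.
Proof. by rewrite /cc invr_ge0 sqrtC_ge0 ler0n. Qed.
Lemma cc_conj n : (cc n)^* = cc n.
Proof. exact: geC0_conj (cc_ge0 n). Qed.
Lemma cc_sq n : cc n * cc n = (n%:R)^-1.
Proof. by rewrite -expr2 /cc exprVn sqrtCK. Qed.

Lemma step1 (N d : nat) (G : 'I_N -> 'I_d -> 'I_N) (psi : 'I_N -> algC) :
  colored_regular G -> forall x : reg N d,
  app (CUwalk G) (@init_state N d psi) x =
  cc 2 * cc d * (if x.1 then psi (G x.2.1 x.2.2) else psi x.2.1).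
Proof.
move=> HG [b [j k]] /=.
pose y0 : reg N d := if b then (true, (G j k, k)) else (b, (j, k)).
have E : forall y, CUwalk G (b, (j, k)) y = (y0 == y)%:R.
  case=> b' [j' k']; rewrite /CUwalk /Uwalk /y0 /=; clear y0.
  case: b; case: b' => //=.
  - rewrite !xpair_eqE /=.
    case: (eqVneq k' k) => [->|nk]; last by rewrite !andbF.
    rewrite ?eqxx ?andbT.
    have -> : (G j' k == j) = (G j k == j') by apply/eqP/eqP => H; rewrite -H HG.
    by [].
rewrite /app; under eq_bigr do rewrite E.
rewrite sum_delta /y0 {E y0} /init_state /ket_plus /ket0bar -/(cc 2) -/(cc d).
by case: b => /=; rewrite mulrAC.
Qed.

Definition chi (N d : nat) (G : 'I_N -> 'I_d -> 'I_N) (psi : 'I_N -> algC) (j : 'I_N) : algC :=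
  (2 * d%:R)^-1 * \sum_(k : 'I_d) (psi j + psi (G j k)).
Arguments chi {N d}.

Lemma step2 (N d : nat) (G : 'I_N -> 'I_d -> 'I_N) (psi : 'I_N -> algC) (phi : reg N d -> algC) :
  (forall x, phi x = cc 2 * cc d * (if x.1 then psi (G x.2.1 x.2.2) else psi x.2.1)) ->
  forall x, app (@P_plus_0bar N d) phi x = cc 2 * cc d * chi G psi x.2.1.
Proof.
move=> Hphi [b [j k]] /=.
rewrite /app sum_reg.
pose K := cc 2 * cc 2 * cc d * cc d * (cc 2 * cc d).
have T : forall b' j' k', P_plus_0bar (b, (j, k)) (b', (j', k')) * phi (b', (j', k')) =
   (j == j')%:R * (K * (if b' then psi (G j' k') else psi j')).
  move=> b' j' k'; rewrite Hphi /P_plus_0bar /ket_plus /ket0bar /= -/(cc 2) -/(cc d) !cc_conj /K.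
  ring.
under eq_bigr => b' _ do under eq_bigr => j' _ do rewrite (eq_bigr _ (fun k' _ => T b' j' k')) -mulr_sumr.
under eq_bigr => b' _ do rewrite sum_delta.
rewrite big_bool /= -big_split /= /chi mulr_sumr.
have -> : K = cc 2 * cc d * (2 * d%:R)^-1.
  by rewrite /K invfM -(cc_sq 2) -(cc_sq d); ring.
by rewrite mulr_sumr; apply: eq_bigr => k' _; ring.
Qed.

Lemma step3 (N d : nat) (f : 'I_N -> algC) (phi : reg N d -> algC) :
  (forall x, phi x = cc 2 * cc d * f x.2.1) ->
  forall x, app (@P_W_perp N d) phi x =
     cc 2 * cc d * (f x.2.1 - (N%:R)^-1 * \sum_(j : 'I_N) f j).
Proof.
move=> Hphi [b [j k]] /=.
rewrite /app sum_reg.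
have T : forall b' j' k', P_W_perp (b, (j, k)) (b', (j', k')) * phi (b', (j', k')) =
   (b == b')%:R * ((k == k')%:R * (((j == j')%:R - cc N * cc N) * (cc 2 * cc d * f j'))).
  move=> b' j' k'; rewrite Hphi /P_W_perp /ket0bar /= -/(cc N) !cc_conj.
  ring.
rewrite (eq_bigr _ (fun b' _ => eq_bigr _ (fun j' _ => eq_bigr _ (fun k' _ => T b' j' k')))).
under eq_bigr => b' _ do under eq_bigr => j' _ do rewrite -mulr_sumr sum_delta.
under eq_bigr => b' _ do rewrite -mulr_sumr.
rewrite sum_delta.
have -> : \sum_(i < N) ((j == i)%:R - cc N * cc N) * (cc 2 * cc d * f i) =
  \sum_(i < N) (j == i)%:R * (cc 2 * cc d * f i) - \sum_(i < N) (cc N * cc N) * (cc 2 * cc d * f i).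
  by rewrite -sumrB; apply: eq_bigr => i _; ring.
rewrite sum_delta -mulr_sumr cc_sq -mulr_sumr.
ring.
Qed.

Lemma step4 (N d : nat) (g : 'I_N -> algC) (phi : reg N d -> algC) :
  (forall x, phi x = cc 2 * cc d * g x.2.1) -> (0 < d)%N ->
  norm2 phi = \sum_(j : 'I_N) `|g j| ^+ 2.
Proof.
move=> Hphi d0.
rewrite /norm2 sum_reg.
under eq_bigr => b _ do under eq_bigr => j _ do under eq_bigr => k _ do
   rewrite Hphi /= !normrM !exprMn.
rewrite big_bool /= -big_split /=.
apply: eq_bigr => j _.
rewrite -big_split /= sumr_const card_ord.
have h2 : `|cc 2| ^+ 2 = 2^-1 by rewrite ger0_norm ?cc_ge0 // expr2 cc_sq.
have hd : `|cc d| ^+ 2 = (d%:R)^-1 by rewrite ger0_norm ?cc_ge0 // expr2 cc_sq.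
rewrite h2 hd -mulr2n -mulrnA.
have dn : (d%:R : algC) != 0 by rewrite pnatr_eq0 -lt0n.
have E : forall x : algC, (2%:R)^-1 / d%:R * x *+ (2 * d) = x.
  move=> x; rewrite -mulr_natr natrM; field; by rewrite dn.
exact: E.
Qed.

Lemma accept_eq (N d : nat) (G : 'I_N -> 'I_d -> 'I_N) (psi : 'I_N -> algC) :
  colored_regular G -> (0 < d)%N ->
  accept_prob G psi = \sum_(j : 'I_N)
     `|chi G psi j - (N%:R)^-1 * \sum_(i : 'I_N) chi G psi i| ^+ 2.
Proof.
move=> HG d0; rewrite /accept_prob.
apply: step4 => // x.
apply: step3 => y.
exact: (@step2 _ _ G psi _ (@step1 _ _ G psi HG) y).
Qed.

Lemma variance (N : nat) (f : 'I_N -> algC) : (0 < N)%N ->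
  (forall j, f j \is Num.real) ->
  \sum_(j : 'I_N) `|f j - (N%:R)^-1 * \sum_(i : 'I_N) f i| ^+ 2 =
  \sum_(j : 'I_N) f j ^+ 2 - (\sum_(i : 'I_N) f i) ^+ 2 / N%:R.
Proof.
move=> N0 fr.
set m := (N%:R)^-1 * _.
have mr : m \is Num.real.
  rewrite /m rpredM // ?rpredV ?realn //.
  by apply: rpred_sum => i _; exact: fr.
have -> : \sum_(j : 'I_N) `|f j - m| ^+ 2 = \sum_(j : 'I_N) ((f j ^+ 2 - (2 * m) * f j) + m ^+ 2).
  by apply: eq_bigr => j _; rewrite real_normK ?rpredB //; ring.
rewrite big_split sumrB /= -mulr_sumr sumr_const card_ord.
have Nn : (N%:R : algC) != 0 by rewrite pnatr_eq0 -lt0n.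
have E : forall (a s mm : algC), mm = (N%:R)^-1 * s ->
   a - 2 * mm * s + mm ^+ 2 *+ N = a - s ^+ 2 / N%:R.
  move=> a s mm ->; rewrite -mulr_natr; field; by rewrite Nn.
exact: E.
Qed.

Lemma ketS_ge0 (N : nat) (S : {set 'I_N}) j : 0 <= ketS S j.
Proof. by rewrite /ketS; case: ifP => // _; exact: cc_ge0. Qed.

Lemma chi_ge0 (N d : nat) (G : 'I_N -> 'I_d -> 'I_N) (S : {set 'I_N}) j :
  0 <= chi G (ketS S) j.
Proof.
rewrite /chi mulr_ge0 //; first by rewrite invr_ge0 mulr_ge0 // ler0n.
by apply: sumr_ge0 => k _; rewrite addr_ge0 // ketS_ge0.
Qed.

Lemma sum_ketS (N : nat) (S : {set 'I_N}) :
  \sum_(j : 'I_N) ketS S j = cc #|S| *+ #|S|.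
Proof.
rewrite /ketS -big_mkcond /= sumr_const. done.
Qed.

Lemma sum_chi (N d : nat) (G : 'I_N -> 'I_d -> 'I_N) (psi : 'I_N -> algC) :
  colored_regular G -> (0 < d)%N ->
  \sum_(j : 'I_N) chi G psi j = \sum_(j : 'I_N) psi j.
Proof.
move=> HG d0.
rewrite /chi -mulr_sumr exchange_big /=.
have R : forall k : 'I_d, \sum_(j : 'I_N) (psi j + psi (G j k)) = 2 * \sum_(j : 'I_N) psi j.
  move=> k; rewrite big_split /=.
  have inj : injective (fun j => G j k).
    by apply: (can_inj (g := fun j => G j k)) => j; rewrite HG.
  have -> : \sum_(j : 'I_N) psi (G j k) = \sum_(j : 'I_N) psi j.
    by rewrite [RHS](reindex_inj inj).
  by rewrite mulr2n mulrDl mul1r.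
rewrite (eq_bigr _ (fun k _ => R k)) sumr_const card_ord.
have dn : (d%:R : algC) != 0 by rewrite pnatr_eq0 -lt0n.
have E : forall x : algC, (2 * d%:R)^-1 * ((2 * x) *+ d) = x.
  move=> x; rewrite -mulr_natr; field; by rewrite dn.
exact: E.
Qed.

Lemma chi_C (N d : nat) (G : 'I_N -> 'I_d -> 'I_N) (S C : {set 'I_N}) j :
  (0 < d)%N -> is_component G C -> C \subset S -> j \in C ->
  chi G (ketS S) j = cc #|S|.
Proof.
move=> d0 [v ->] CS jC.
have inS : forall w, w \in [set w | connect (gedge G) v w] -> ketS S w = cc #|S|.
  by move=> w wC; rewrite /ketS (subsetP CS w wC).
have R : forall k : 'I_d, ketS S j + ketS S (G j k) = 2 * cc #|S|.
  move=> k; rewrite !inS // ?mulr2n ?mulrDl ?mul1r //.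
  move: jC; rewrite !inE => jC.
  apply: (connect_trans jC); apply: connect1.
  by apply/existsP; exists k.
rewrite /chi (eq_bigr _ (fun k _ => R k)) sumr_const card_ord.
have dn : (d%:R : algC) != 0 by rewrite pnatr_eq0 -lt0n.
have E : forall x : algC, (2 * d%:R)^-1 * ((2 * x) *+ d) = x.
  move=> x; rewrite -mulr_natr; field; by rewrite dn.
exact: E.
Qed.

Lemma fin_alg (A B c n : algC) (s : nat) : c * c = (s%:R)^-1 -> (s%:R : algC) != 0 ->
  A <= B -> A - s%:R / n <= B - (c *+ s) ^+ 2 / n.
Proof.
move=> hc hs hAB.
have -> : (c *+ s) ^+ 2 / n = s%:R / n.
  by rewrite -[c *+ s]mulr_natr exprMn expr2 hc [s%:R ^+ 2]expr2 mulrA mulVf // mul1r.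
by rewrite lerD2r.
Qed.

Lemma accept_lb (N d : nat) (G : 'I_N -> 'I_d -> 'I_N) (S C : {set 'I_N}) :
  colored_regular G -> (0 < d)%N -> (0 < N)%N -> is_component G C -> C \subset S ->
  (0 < #|S|)%N ->
  #|C|%:R / #|S|%:R - #|S|%:R / N%:R <= accept_prob G (ketS S).
Proof.
move=> HG d0 N0 HC CS S0.
have Sn : (#|S|%:R : algC) != 0 by rewrite pnatr_eq0 -lt0n.
have H : #|C|%:R / #|S|%:R <= \sum_(j : 'I_N) chi G (ketS S) j ^+ 2.
  rewrite (bigID (fun j => j \in C)) /=.
  have E2 : \sum_(i < N | i \in C) chi G (ketS S) i ^+ 2 = cc #|S| * cc #|S| *+ #|C|.
    rewrite -sumr_const; apply: eq_bigr => j jC.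
    by rewrite (@chi_C _ _ G S C j d0 HC CS jC) expr2.
  rewrite E2 cc_sq mulr_natl -[X in X <= _]addr0.
  apply: lerD => //.
  by apply: sumr_ge0 => j _; rewrite exprn_ge0 // chi_ge0.
rewrite accept_eq // variance //; last by move=> j; apply: ger0_real; apply: chi_ge0.
rewrite sum_chi // sum_ketS.
exact: fin_alg (cc_sq _) Sn H.
Qed.
Lemma num_final (R : realFieldType) (t A : R) : 0 <= t -> t <= 1/4 ->
  (1 - t^+2) <= A * (1+t^+2) -> 1 - 3*t <= A - (1+t^+2)*t^+2.
Proof.
move=> t0 t1 h.
have g0 : 0 <= t^+2 by nra.
have g1 : t^+2 <= 1/16 by nra.
have hA : 1 - 2*t^+2 <= A.
  have : 0 <= (A - (1 - 2*t^+2)) * (1 + t^+2) by nra.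
  rewrite pmulr_lge0; last by lra.
  lra.
have : 3 * t^+2 + t^+4 <= 3 * t.
 have : t^+4 = t^+2 * t^+2 by rewrite -exprD.
 move=> ->. nra.
have : (1 + t^+2) * t^+2 = t^+2 + t^+4 by rewrite mulrDl mul1r -exprD.
lra.
Qed.
Lemma leR (x y : algR) : (x <= y) = (algRval x <= algRval y).
Proof. by []. Qed.
Lemma num_final_C (t A : algC) : t \is Creal -> A \is Creal -> 0 <= t -> t <= 1/4 ->
  (1 - t^+2) <= A * (1+t^+2) -> 1 - 3*t <= A - (1+t^+2)*t^+2.
Proof.
move=> Ht HA.
have := @num_final _ (in_algR Ht) (in_algR HA).
rewrite !leR /=; exact.
Qed.

Theorem corollary16 :
  exists n0 : nat, forall n : nat, (n0 <= n)%N ->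
  forall (G : 'I_(2 ^ n) -> 'I_100 -> 'I_(2 ^ n)),
    colored_regular G ->
  forall (S C : {set 'I_(2 ^ n)}),
    #|S|%:R = zeta (2 ^ n) ->
    is_component G C ->
    C \subset S ->
    (1 - gamma (2 ^ n)) * zpar (2 ^ n) <= #|C|%:R ->
    1 - 3 * sqrtC (gamma (2 ^ n)) <= accept_prob G (ketS S).
Proof.
exists 40 => n n40 G HG S C HS HC CS HCl.
have N0 : (0 < 2 ^ n)%N by rewrite expn_gt0.
have Nn : ((2 ^ n)%:R : algC) != 0 by rewrite pnatr_eq0 -lt0n.
have L0 : 0 <= ell (2 ^ n) by rewrite /ell rootC_ge0 // ler0n.
have L10 : ell (2 ^ n) ^+ 10 = (2 ^ n)%:R by rewrite /ell rootCK.
have L16 : 16 <= ell (2 ^ n).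
  have h16 : (16 : algC) = (2 ^ 4)%:R by [].
  rewrite -(ler_pXn2r (n:=10)) // ?nnegrE ?ler0n // L10 h16 -natrX ler_nat -expnM.
  by apply: leq_pexp2l.
have Lpos : 0 < ell (2 ^ n) by apply: lt_le_trans L16.
have Ln : ell (2 ^ n) != 0 by rewrite gt_eqF.
have g0 : 0 < gamma (2 ^ n) by rewrite /gamma invr_gt0.
have g16 : gamma (2 ^ n) <= 1 / 16.
  by rewrite /gamma mul1r lef_pV2 ?posrE.
set g := gamma (2 ^ n) in g0 g16 HS HCl *.
set t := sqrtC g.
have t0 : 0 <= t by rewrite sqrtC_ge0 ltW.
have t2 : t ^+ 2 = g by rewrite sqrtCK.
have t4 : t <= 1 / 4.
  have -> : (1 / 4 : algC) = sqrtC (1 / 16).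
    have -> : (1 / 16 : algC) = (1 / 4) ^+ 2.
      by rewrite expr2 !mul1r -invfM -natrM.
    by rewrite sqrCK // divr_ge0 ?ler0n.
  rewrite /t ler_sqrtC // nnegrE ?ltW //.
  by rewrite divr_gt0 ?ltr0n.
have z0 : 0 < zpar (2 ^ n) by rewrite /zpar divr_gt0 // ltr0n.
have zn : zpar (2 ^ n) != 0 by rewrite gt_eqF.
have g1n : 1 + g != 0 by rewrite gt_eqF // addr_gt0.
have Spos : (0 < #|S|)%N.
  by rewrite -(ltr0n algC) HS /zeta mulr_gt0 // addr_gt0.
set A := (#|C|%:R / #|S|%:R : algC).
have Ar : A \is Num.real by apply: ger0_real; rewrite /A divr_ge0 // ler0n.
have HA : 1 - t ^+ 2 <= A * (1 + t ^+ 2).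
  rewrite t2 /A HS /zeta.
  have -> : #|C|%:R / ((1 + g) * zpar (2 ^ n)) * (1 + g) = #|C|%:R / zpar (2 ^ n).
    by field; rewrite zn g1n.
  by rewrite ler_pdivlMr.
have HB : #|S|%:R / (2 ^ n)%:R = (1 + t ^+ 2) * t ^+ 2.
  rewrite t2 HS /zeta /zpar /g /gamma.
  by field; rewrite Ln Nn.
apply: le_trans (@num_final_C t A (ger0_real t0) Ar t0 t4 HA) _.
rewrite -HB.
by apply: accept_lb.
Qed.
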